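(* For any $1\le q\le \mathsf n$, conditionally on $X_{q:\mathsf n}$, $(V_{\mathsf n},\dots,V_1)$ is a Markov chain. Its transition kernels $(K^{V|X}_{\pi_V,k,q})$ satisfy: for all $q\le k<\mathsf n$ there exists a measure $\mu_{k,q}$ such that for every measurable set $A$, \[K^{V|X}_{\pi_V,k,q}(V_{k+1},A)=\mathbb P_{\pi_V}(V_k\in A\mid V_{k+1:\mathsf n},X_{q:\mathsf n})=\mathbb P_{\pi_V}(V_k\in A\mid V_{k+1},X_{q:\mathsf n})\ge\nu_k\,\mu_{k,q}(A),\] while for all $1\le k<q$, \[K^{V|X}_{\pi_V,k,q}(V_{k+1},A)=\mathbb P_{\pi_V}(V_k\in A\mid V_{k+1:\mathsf n},X_{q:\mathsf n})=\pi_V(A).\]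
   Context: Let $\mathsf n\ge1$, $\pi_V$ a probability distribution on a measurable space $\mathbb V$, $\mathbb X$ a discrete set, and $K_i:\mathbb X\times\mathbb V^2\to[0,\infty)$ ($i\ge1$) such that each $K_i(\cdot,v,w)$ is a probability distribution on $\mathbb X$. $\mathbb P_{\pi_V}$ is the law on $\mathbb V^{\mathsf n+1}\times\mathbb X^{\mathsf n}$ given by $\mathbb P_{\pi_V}(V_{1:\mathsf n+1}\in A_{1:\mathsf n+1},X_{1:\mathsf n}=x_{1:\mathsf n})=\int\prod_{i=1}^{\mathsf n+1}\mathbf 1_{A_i}(v_i)\pi_V(dv_i)\prod_{i=1}^{\mathsf n}K_i(x_i,v_i,v_{i+1})$, i.e. $V_i$ i.i.d. $\pi_V$ and, given $V$, the $X_i$ independent with $\mathbb P(X_i=x\mid V)=K_i(x,V_i,V_{i+1})$. Assumption H2: there exist $\nu_i>0$ with $\nu_i\le K_i(x,v,w)\le1$ for all $x\in\mathbb X$, all $i$, all $v,w\in\mathbb V$. *)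

(* Defs.v *)
From HB Require Import structures.
From mathcomp Require Import all_boot all_order all_algebra.
From mathcomp Require Import all_classical all_reals all_analysis measurable_realfun.
Set Implicit Arguments. Unset Strict Implicit. Unset Printing Implicit Defensive.
Import Order.TTheory GRing.Theory Num.Theory.
Local Open Scope classical_set_scope.
Local Open Scope ring_scope.

Section HMM.
Context {R : realType} {d : measure_display} {V : measurableType d}.
Variable piV : probability V R.

(* Integral of f against the n-fold product measure piV^{(x) m} on m-tuples,
   computed as an iterated integral (first coordinate outermost). *)
Fixpoint tint (m : nat) : (m.-tuple V -> \bar R) -> \bar R :=
  match m return (m.-tuple V -> \bar R) -> \bar R with
  | 0 => fun f => f [tuple]
  | m'.+1 => fun f => (\int[piV]_v tint (fun t : m'.-tuple V => f (cons_tuple v t)))%E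
  end.

Variables (X : finType) (n : nat) (K : nat -> X -> V -> V -> R).

(* Coordinates are 0-based in tuples: V_i = tnth v (i-1), X_i = tnth x (i-1).
   weight x v = prod_{i=1}^n K_i(x_i, v_i, v_{i+1}). *)
Definition weight (x : n.-tuple X) (v : (n.+1).-tuple V) : R :=
  \prod_(i < n) K i.+1 (tnth x i) (tnth v (widen_ord (leqnSn n) i))
                                  (tnth v (lift ord0 i)).

Definition agree (q : nat) (x y : n.-tuple X) : bool :=
  [forall i : 'I_n, (q <= i.+1)%N ==> (tnth x i == tnth y i)].

(* E_{P_{pi_V}}[ f(V_{1:n+1}) ; X_{q:n} = y_{q:n} ], where P_{pi_V} is the
   joint law: V_i iid pi_V, and given V, X_i independent with law
   K_i(., V_i, V_{i+1}). *)
Definition PE (q : nat) (f : (n.+1).-tuple V -> \bar R) (y : n.-tuple X) : \bar R :=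
  (\sum_(x : n.-tuple X | agree q x y) tint (fun v => f v * (weight x v)%:E))%E.

Definition depends_only (lo hi : nat) (B : set ((n.+1).-tuple V)) : Prop :=
  forall v v' : (n.+1).-tuple V,
    (forall i : 'I_n.+1, (lo <= i.+1 <= hi)%N -> tnth v i = tnth v' i) ->
    B v -> B v'.

(* Kc y w A is a version of P(V_k \in A | V_{lo:hi}, X_{q:n}) evaluated at
   V_{k+1} = w, X_{q:n} = y_{q:n}: for every measurable A and every set B in
   sigma(V_{lo:hi}) and every y,
   P(V_k in A, V_{1:n+1} in B, X_{q:n} = y_{q:n})
     = E[ Kc y V_{k+1} A ; V_{1:n+1} in B, X_{q:n} = y_{q:n} ]. *)
Definition cond_version (q k lo hi : nat)
    (Kc : n.-tuple X -> V -> probability V R) : Prop :=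
  forall (y : n.-tuple X) (A : set V) (B : set ((n.+1).-tuple V)),
    measurable A -> measurable B -> depends_only lo hi B ->
    PE q (fun v => (\1_B v * \1_A (tnth v (inord k.-1)))%:E) y =
    PE q (fun v => ((\1_B v)%:E * Kc y (tnth v (inord k)) A)%E) y.

End HMM.

(* Main.v *)
Set Warnings "-all".
Require Import Defs.
From HB Require Import structures.
From mathcomp Require Import all_boot all_order all_algebra.
From mathcomp Require Import all_classical all_reals all_analysis measurable_realfun.
From mathcomp Require Import ring.
Import Order.TTheory GRing.Theory Num.Theory.
Local Open Scope classical_set_scope.
Local Open Scope ring_scope.
Section Tint.
Local Open Scope ereal_scope.
Context {R : realType} {d : measure_display} {V : measurableType d}.
Variable piV : probability V R.
Local Notation ti := (@tint R d V piV).

Lemma tint_ge0 m (f : m.-tuple V -> \bar R) : (forall t, 0 <= f t) -> 0 <= ti f.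
Proof.
elim: m f => [|m IH] f f0 /=; first exact: f0.
by apply: integral_ge0 => v _; apply: IH => t; exact: f0.
Qed.

Lemma tint_meas m : forall d' (T : measurableType d') (H : T * m.-tuple V -> \bar R),
  measurable_fun setT H -> (forall z, 0 <= H z) ->
  measurable_fun setT (fun t => ti (fun u => H (t, u))).
Proof.
elim: m => [|m IH] d' T H mH H0 /=.
  apply: measurableT_comp mH _ => /=.
  exact: measurable_fun_pair.
pose H' := fun z : (T * V) * m.-tuple V => H (z.1.1, cons_tuple z.1.2 z.2).
have mH' : measurable_fun setT H'.
  apply: measurableT_comp mH _ => /=.
  apply: measurable_fun_pair; first exact: measurableT_comp.
  apply: (measurable_cons (f := fun z : (T * V) * m.-tuple V => z.1.2) (g := snd)) => //.
  exact: measurableT_comp.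
have := IH _ _ H' mH' (fun z => H0 _).
move=> mF.
have := measurable_fun_fubini_tonelli_F (m2 := piV) _ mF (fun z => @tint_ge0 m _ (fun _ => H0 _)).
rewrite /fubini_F /=.
by move=> h; exact h.
Qed.


Lemma tint_meas1 m (f : m.+1.-tuple V -> \bar R) :
  measurable_fun setT f -> (forall t, 0 <= f t) ->
  measurable_fun setT (fun v => ti (fun u => f (cons_tuple v u))).
Proof.
move=> mf f0.
apply: (@tint_meas _ _ _ (fun z : V * m.-tuple V => f (cons_tuple z.1 z.2))) => //.
apply: measurableT_comp mf _.
exact: (measurable_cons (f := fst) (g := snd)).
Qed.

Lemma meas_cons1 m (f : m.+1.-tuple V -> \bar R) v :
  measurable_fun setT f -> measurable_fun setT (fun u : m.-tuple V => f (cons_tuple v u)).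
Proof.
move=> mf; apply: measurableT_comp mf _.
exact: (measurable_cons (f := cst v) (g := id)).
Qed.

Lemma tint_cst m c : ti (fun _ : m.-tuple V => c) = c.
Proof.
elim: m => [|m IH] //=.
under eq_integral do rewrite IH.
rewrite integral_cst //; rewrite [X in _ * X]probability_setT; exact: mule1.
Qed.

Lemma tint_sum m (I : Type) (s : seq I) (f : I -> m.-tuple V -> \bar R) :
  (forall i, measurable_fun setT (f i)) -> (forall i t, 0 <= f i t) ->
  ti (fun t => \sum_(i <- s) f i t) = \sum_(i <- s) ti (f i).
Proof.
elim: m f => [|m IH] f mf f0 //=.
transitivity (\int[piV]_v \sum_(i <- s) ti (fun u => f i (cons_tuple v u))).
  apply: eq_integral => v _; apply: (IH (fun i u => f i (cons_tuple v u))) => //.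
  by move=> i; exact: meas_cons1.
rewrite ge0_integral_sum //.
  by move=> i; apply: tint_meas1.
by move=> i v _; apply: tint_ge0.
Qed.

Lemma tint_scale m (c : \bar R) (f : m.-tuple V -> \bar R) :
  0 <= c -> measurable_fun setT f -> (forall t, 0 <= f t) ->
  ti (fun t => c * f t) = c * ti f.
Proof.
elim: m f => [|m IH] f c0 mf f0 //=.
transitivity (\int[piV]_v (c * ti (fun u => f (cons_tuple v u)))).
  apply: eq_integral => v _; apply: (IH (fun u => f (cons_tuple v u))) => //.
  exact: meas_cons1.
rewrite ge0_integralZl //.
  exact: tint_meas1.
by move=> v _; apply: tint_ge0.
Qed.

Lemma tint_nneseries m (f : nat -> m.-tuple V -> \bar R) :
  (forall i, measurable_fun setT (f i)) -> (forall i t, 0 <= f i t) ->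
  ti (fun t => \sum_(0 <= i <oo) f i t) = \sum_(0 <= i <oo) ti (f i).
Proof.
elim: m f => [|m IH] f mf f0 //=.
transitivity (\int[piV]_v \sum_(0 <= i <oo) ti (fun u => f i (cons_tuple v u))).
  apply: eq_integral => v _; apply: (IH (fun i u => f i (cons_tuple v u))) => //.
  by move=> i; exact: meas_cons1.
rewrite integral_nneseries //.
  by move=> i; apply: tint_meas1.
by move=> i v _; apply: tint_ge0.
Qed.

Lemma tint_swap1 m (H : V * m.-tuple V -> \bar R) :
  measurable_fun setT H -> (forall z, 0 <= H z) ->
  \int[piV]_v ti (fun u => H (v, u)) = ti (fun u => \int[piV]_v H (v, u)).
Proof.
elim: m H => [|m IH] H mH H0 //=.
pose F := fun z : V * V => ti (fun u => H (z.1, cons_tuple z.2 u)).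
have mF : measurable_fun setT F.
  apply: (@tint_meas _ _ _ (fun z : (V * V) * m.-tuple V => H (z.1.1, cons_tuple z.1.2 z.2))) => //.
  apply: measurableT_comp mH _.
  apply: measurable_fun_pair; first exact: measurableT_comp.
  apply: (measurable_cons (f := fun z : (V * V) * m.-tuple V => z.1.2) (g := snd)) => //.
  exact: measurableT_comp.
have := fubini_tonelli (m1 := piV) (m2 := piV) F mF (fun z => @tint_ge0 m _ (fun _ => H0 _)).
rewrite /F /= => ->.
apply: eq_integral => w _.
apply: (IH (fun z => H (z.1, cons_tuple w z.2))) => //.
apply: measurableT_comp mH _.
apply: measurable_fun_pair => //.
exact: (measurable_cons (f := cst w) (g := snd)).
Qed.

Lemma tint_swap m1 m2 (H : m1.-tuple V * m2.-tuple V -> \bar R) :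
  measurable_fun setT H -> (forall z, 0 <= H z) ->
  ti (fun a => ti (fun b => H (a, b))) = ti (fun b => ti (fun a => H (a, b))).
Proof.
elim: m1 H => [|m1 IH] H mH H0 //=.
transitivity (\int[piV]_v ti (fun b => ti (fun a => H (cons_tuple v a, b)))).
  apply: eq_integral => v _.
  apply: (IH (fun z => H (cons_tuple v z.1, z.2))) => //.
  apply: measurableT_comp mH _.
  apply: measurable_fun_pair => //.
  exact: (measurable_cons (f := cst v) (g := fst)).
apply: (@tint_swap1 _ (fun z : V * m2.-tuple V => ti (fun a => H (cons_tuple z.1 a, z.2)))).
  apply: (@tint_meas _ _ _ (fun z : (V * m2.-tuple V) * m1.-tuple V => H (cons_tuple z.1.1 z.2, z.1.2))) => //.
  apply: measurableT_comp mH _.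
  apply: measurable_fun_pair; last exact: measurableT_comp.
  apply: (measurable_cons (f := fun z : (V * m2.-tuple V) * m1.-tuple V => z.1.1) (g := snd)) => //.
  exact: measurableT_comp.
by move=> z; apply: tint_ge0.
Qed.

Lemma tint_split m1 m2 (f : (m1 + m2).-tuple V -> \bar R) :
  ti f = ti (fun a : m1.-tuple V => ti (fun b : m2.-tuple V => f (cat_tuple a b))).
Proof.
elim: m1 f => [|m1 IH] f /=.
  by congr ti; apply/funext => b; congr f; apply/val_inj.
apply: eq_integral => v _.
rewrite (IH (fun t => f (cons_tuple v t))).
congr ti; apply/funext => a; congr ti; apply/funext => b.
by congr f; apply/val_inj.
Qed.

Lemma tint_cast m m' (e : m = m') (f : m'.-tuple V -> \bar R) :
  ti f = ti (fun t => f (tcast e t)).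
Proof.
case: m' / e in f *.
by congr ti; apply/funext => t; rewrite tcast_id.
Qed.

Lemma tint_coord m j (A : set V) : (j < m)%N -> measurable A ->
  ti (fun t : m.-tuple V => (\1_A (nth point t j))%:E) = piV A.
Proof.
elim: m j => [|m IH] j //= jm mA.
case: j jm => [|j] jm /=.
  under eq_integral do rewrite tint_cst.
  by rewrite integral_indic // setIT.
under eq_integral do rewrite IH //.
rewrite integral_cst //; rewrite [X in _ * X]probability_setT; exact: mule1.
Qed.

Lemma measurable_nth m j : measurable_fun setT (fun t : m.-tuple V => nth point (val t) j).
Proof.
case: (ltnP j m) => jm.
  rewrite (_ : (fun t : m.-tuple V => _) = (fun t => tnth t (Ordinal jm))).
    exact: measurable_tnth.
  by apply/funext => t; rewrite (tnth_nth point).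
rewrite (_ : (fun t : m.-tuple V => _) = cst point) //.
by apply/funext => t; rewrite nth_default // size_tuple.
Qed.

Definition smeas d' (T : measurableType d') (s : T -> seq V) :=
  forall j, measurable_fun setT (fun z => nth point (s z) j).
Arguments smeas {d' T}.

Lemma smeas_tuple d' (T : measurableType d') m (f : T -> m.-tuple V) :
  measurable_fun setT f -> smeas (fun z => val (f z)).
Proof. by move=> mf j; apply: (measurableT_comp (@measurable_nth m j) mf). Qed.

Lemma tuple_smeas d' (T : measurableType d') m (f : T -> m.-tuple V) :
  smeas (fun z => val (f z)) -> measurable_fun setT f.
Proof.
move=> sf; apply/measurable_fun_tnthP => i.
rewrite (_ : _ \o _ = fun z => nth point (val (f z)) i); first exact: sf.
by apply/funext => z /=; rewrite (tnth_nth point).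
Qed.

Lemma smeas_cat d' (T : measurableType d') m (s1 s2 : T -> seq V) :
  (forall z, size (s1 z) = m) -> smeas s1 -> smeas s2 ->
  smeas (fun z => s1 z ++ s2 z).
Proof.
move=> sz m1 m2 j.
case: (ltnP j m) => jm.
  rewrite (_ : (fun z => _) = (fun z => nth point (s1 z) j)); first exact: m1.
  by apply/funext => z; rewrite nth_cat sz jm.
rewrite (_ : (fun z => _) = (fun z => nth point (s2 z) (j - m))); first exact: m2.
by apply/funext => z; rewrite nth_cat sz ltnNge jm.
Qed.

Lemma smeas_cons1 d' (T : measurableType d') (w : T -> V) :
  measurable_fun setT w -> smeas (fun z => [:: w z]).
Proof.
by move=> mw [|j] //=.
Qed.

Lemma smeas_cst d' (T : measurableType d') (s : seq V) : smeas (fun _ : T => s).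
Proof. by []. Qed.

Lemma tint_le m (f g : m.-tuple V -> \bar R) :
  measurable_fun setT f -> measurable_fun setT g -> (forall t, 0 <= f t) ->
  (forall t, f t <= g t) -> ti f <= ti g.
Proof.
elim: m f g => [|m IH] f g mf mg f0 fg //=.
apply: ge0_le_integral => //.
- by move=> v _; apply: tint_ge0.
- exact: tint_meas1.
- apply: tint_meas1 => // t; exact: le_trans (f0 t) (fg t).
- by move=> v _; apply: IH => //; exact: meas_cons1.
Qed.

Lemma indic_ge0 (T : Type) (A : set T) (x : T) : (0 <= (\1_A x : R))%R.
Proof. by rewrite indicE; case: (x \in A). Qed.

Section DmSec.
Variables (k : nat) (g : k.-tuple V -> R).

Definition gabs : k.-tuple V -> R :=
  fun a => if `[< measurable_fun setT g >] then `|g a|%R else 0%R.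

Lemma gabs_meas : measurable_fun setT gabs.
Proof.
rewrite /gabs; case: asboolP => h //.
apply: measurableT_comp h => //; exact: normr_measurable.
Qed.

Lemma gabs_ge0 a : (0 <= gabs a)%R.
Proof. by rewrite /gabs; case: asboolP. Qed.

Lemma gabsE : measurable_fun setT g -> (forall a, 0 <= g a)%R -> gabs = g.
Proof.
move=> mg g0; apply/funext => a; rewrite /gabs.
by case: asboolP => // _; rewrite ger0_norm.
Qed.

Definition Dm (A : set V) : \bar R :=
  ti (fun a : k.-tuple V => (\1_A (nth point (val a) k.-1))%:E * (gabs a)%:E).

Lemma Dm_meas_int (A : set V) : measurable A ->
  measurable_fun setT (fun a : k.-tuple V => (\1_A (nth point (val a) k.-1))%:E * (gabs a)%:E).
Proof.
move=> mA; apply: emeasurable_funM; apply/measurable_EFinP.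
  apply: measurableT_comp (@measurable_nth k k.-1) => //.
exact: gabs_meas.
Qed.

Let Dm0 : Dm set0 = 0.
Proof.
rewrite /Dm (_ : (fun a => _) = fun _ => 0); first exact: tint_cst.
by apply/funext => a; rewrite indic0 mul0e.
Qed.

Let Dm_ge0 A : 0 <= Dm A.
Proof.
by apply: tint_ge0 => a; apply: mule_ge0; rewrite lee_fin ?indic_ge0 ?gabs_ge0.
Qed.

Let Dm_sigma : semi_sigma_additive Dm.
Proof.
move=> F mF tF mUF.
have -> : Dm (\bigcup_n F n) = \sum_(0 <= i <oo) Dm (F i).
  rewrite /Dm -tint_nneseries; last 2 first.
  - by move=> i; apply: Dm_meas_int.
  - by move=> i a; apply: mule_ge0; rewrite lee_fin ?indic_ge0 ?gabs_ge0.
  congr ti; apply/funext => a.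
  set x := nth point (val a) k.-1.
  have -> : (\1_(\bigcup_n F n) x)%:E = \sum_(0 <= i <oo) (\1_(F i) x)%:E :> \bar R.
    rewrite -diracE; apply/esym/cvg_lim => //.
    under eq_fun do under eq_bigr do rewrite -diracE.
    exact: measure_sigma_additive.
  rewrite muleC -nneseriesZl; last by move=> i _; rewrite lee_fin indic_ge0.
  by apply: eq_eseriesr => i _; rewrite muleC.
apply: is_cvg_nneseries => i _ _.
exact: Dm_ge0.
Qed.

HB.instance Definition _ := isMeasure.Build _ _ _ Dm Dm0 Dm_ge0 Dm_sigma.

End DmSec.

Section Model.
Variables (X : finType) (n : nat) (K : nat -> X -> V -> V -> R).
Hypothesis Kmeas : forall i x, (1 <= i)%N ->
       measurable_fun [set: V * V] (fun p : V * V => K i x p.1 p.2).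
Hypothesis Kprob : forall i v w, (1 <= i)%N -> (\sum_(x : X) K i x v w = 1)%R.
Hypothesis Kge0 : forall i x v w, (1 <= i)%N -> (0 <= K i x v w)%R.
Hypothesis Kle1 : forall i x v w, (1 <= i)%N -> (K i x v w <= 1)%R.
Variables (q : nat) (y : n.-tuple X).

Definition cW (i : 'I_n) (s : seq V) : R :=
  if (q <= i.+1)%N then K i.+1 (tnth y i) (nth point s i) (nth point s i.+1) else 1%R.
Definition Wq (s : seq V) : R := (\prod_(i < n) cW i s)%R.

Lemma sum_weight (v : n.+1.-tuple V) :
  (\sum_(x : n.-tuple X | agree q x y) weight K x v)%R = Wq (val v).
Proof.
pose F (i : 'I_n) (z : X) := K i.+1 z (nth point (val v) i) (nth point (val v) i.+1).
pose Q (i : 'I_n) := [pred z : X | (q <= i.+1)%N ==> (z == tnth y i)].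
have -> : Wq (val v) = (\prod_(i < n) \sum_(z | Q i z) F i z)%R.
  apply: eq_bigr => i _; rewrite /cW /Q /F.
  case: ifP => qi /=.
    by rewrite (big_pred1_eq _ (tnth y i)).
  by rewrite Kprob.
rewrite bigA_distr_big_dep.
rewrite (reindex (fun f : {ffun 'I_n -> X} => [tuple f i | i < n])) /=; last first.
  apply: onW_bij; exists (fun x : n.-tuple X => [ffun i => tnth x i]).
    by move=> f; apply/ffunP => i; rewrite ffunE tnth_mktuple.
  by move=> x; apply: eq_from_tnth => i; rewrite tnth_mktuple ffunE.
apply: eq_big => f.
  rewrite /agree; apply/forallP/familyP => h i; move: (h i); by rewrite tnth_mktuple.
move=> _; apply: eq_bigr => i _; rewrite tnth_mktuple /F.
by rewrite !(tnth_nth point) /=.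
Qed.

Lemma cW_meas d' (T : measurableType d') (s : T -> seq V) (i : 'I_n) :
  smeas s -> measurable_fun setT (fun z => cW i (s z)).
Proof.
move=> hs; rewrite /cW; case: (q <= i.+1)%N => //.
exact: (measurableT_comp (g := fun z => (nth point (s z) i, nth point (s z) i.+1)) (Kmeas i.+1 (tnth y i) (ltn0Sn i)) (measurable_fun_pair (hs i) (hs i.+1))).
Qed.

Lemma Wq_meas d' (T : measurableType d') (s : T -> seq V) :
  smeas s -> measurable_fun setT (fun z => Wq (s z)).
Proof. by move=> hs; apply: measurable_prod => i _; exact: cW_meas. Qed.

Lemma cW_ge0 i s : (0 <= cW i s)%R.
Proof. by rewrite /cW; case: ifP => // _; exact: Kge0. Qed.

Lemma cW_le1 i s : (cW i s <= 1)%R.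
Proof. by rewrite /cW; case: ifP => // _; exact: Kle1. Qed.

Lemma Wq_ge0 s : (0 <= Wq s)%R.
Proof. by apply: prodr_ge0 => i _; exact: cW_ge0. Qed.

Lemma weight_meas (x : n.-tuple X) : measurable_fun setT (fun v : n.+1.-tuple V => weight K x v).
Proof.
apply: measurable_prod => i _.
exact: (measurableT_comp (g := fun v : n.+1.-tuple V => (tnth v (widen_ord (leqnSn n) i), tnth v (lift ord0 i))) (Kmeas i.+1 (tnth x i) (ltn0Sn i)) (measurable_fun_pair (measurable_tnth _) (measurable_tnth _))).
Qed.

Lemma weight_ge0 (x : n.-tuple X) (v : n.+1.-tuple V) : (0 <= weight K x v)%R.
Proof. by apply: prodr_ge0 => i _; exact: Kge0. Qed.

Lemma PE_tint (f : n.+1.-tuple V -> \bar R) :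
  measurable_fun setT f -> (forall v, 0 <= f v) ->
  PE piV K q f y = ti (fun v => f v * (Wq (val v))%:E).
Proof.
move=> mf f0; rewrite /PE big_mkcond.
transitivity (\sum_(x : n.-tuple X) ti (fun v => if agree q x y then f v * (weight K x v)%:E else 0)).
  by apply: eq_bigr => x _; case: ifP => _ //; rewrite tint_cst.
rewrite -tint_sum; last 2 first.
- move=> x; case: (agree q x y) => //.
  by apply: emeasurable_funM => //; apply/measurable_EFinP; exact: weight_meas.
- by move=> x v; case: (agree q x y) => //; apply: mule_ge0; rewrite ?lee_fin ?weight_ge0.
congr ti; apply/funext => v.
rewrite -big_mkcond /= -ge0_sume_distrr; last by move=> x _; rewrite lee_fin weight_ge0.
by rewrite sumEFin sum_weight.
Qed.



Variable nu : nat -> R.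
Hypothesis nu_pos : forall i, (1 <= i)%N -> (0 < nu i)%R.
Hypothesis Knu : forall i x v w, (1 <= i)%N -> (nu i <= K i x v w)%R.

Lemma prodcW_meas (P : pred 'I_n) d' (T : measurableType d') (s : T -> seq V) :
  smeas s -> measurable_fun setT (fun z => \prod_(i < n | P i) cW i (s z))%R.
Proof.
move=> hs.
rewrite (_ : (fun z => _) = fun z => \prod_(i < n) (if P i then cW i (s z) else 1%R))%R; last first.
  by apply/funext => z; rewrite big_mkcond.
apply: measurable_prod => i _; case: (P i) => //; exact: cW_meas.
Qed.

Definition cnu (i : 'I_n) : R := if (q <= i.+1)%N then nu i.+1 else 1%R.

Lemma cnu_gt0 i : (0 < cnu i)%R.
Proof. by rewrite /cnu; case: ifP => // _; exact: nu_pos. Qed.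

Lemma prodcW_lb (P : pred 'I_n) s :
  (\prod_(i < n | P i) cnu i <= \prod_(i < n | P i) cW i s)%R.
Proof.
apply: ler_prod => i _; rewrite (ltW (cnu_gt0 i)) /= /cnu /cW.
by case: ifP => // _; exact: Knu.
Qed.

Lemma prodcnu_gt0 (P : pred 'I_n) : (0 < \prod_(i < n | P i) cnu i)%R.
Proof. by apply: prodr_gt0 => i _; exact: cnu_gt0. Qed.

Lemma prodcW_le1 (P : pred 'I_n) s : (\prod_(i < n | P i) cW i s <= 1)%R.
Proof. by apply: prodr_ile1 => i _; rewrite cW_ge0 cW_le1. Qed.

Lemma prodcW_ge0 (P : pred 'I_n) s : (0 <= \prod_(i < n | P i) cW i s)%R.
Proof. by apply: prodr_ge0 => i _; rewrite cW_ge0. Qed.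

Section Split.
Variables (k : nat) (hk : (k <= n)%N).
Let m2 := (n.+1 - k)%N.
Let ek : (k + m2 = n.+1)%N := subnKC (leqW hk).
Definition join (a : k.-tuple V) (b : m2.-tuple V) : n.+1.-tuple V := tcast ek (cat_tuple a b).
Definition a0 : k.-tuple V := nseq_tuple k point.

Lemma val_join a b : val (join a b) = val a ++ val b.
Proof. exact: (val_tcast ek (cat_tuple a b)). Qed.

Lemma tint_join (f : n.+1.-tuple V -> \bar R) :
  ti f = ti (fun a : k.-tuple V => ti (fun b : m2.-tuple V => f (join a b))).
Proof. by rewrite (@tint_cast _ _ ek) tint_split. Qed.

Lemma join_meas : measurable_fun setT (fun z : k.-tuple V * m2.-tuple V => join z.1 z.2).
Proof.
apply: tuple_smeas.
rewrite (_ : (fun z => _) = fun z : k.-tuple V * m2.-tuple V => val z.1 ++ val z.2); last first.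
  by apply/funext => z; rewrite val_join.
apply: (@smeas_cat _ _ k) => //.
- by move=> z; rewrite size_tuple.
- exact: smeas_tuple.
- exact: smeas_tuple.
Qed.

Lemma joinl_meas (a : k.-tuple V) : measurable_fun setT (fun b : m2.-tuple V => join a b).
Proof.
apply: tuple_smeas.
rewrite (_ : (fun z => _) = fun b : m2.-tuple V => val a ++ val b); last first.
  by apply/funext => z; rewrite val_join.
apply: (@smeas_cat _ _ k) => //.
- by move=> z; rewrite size_tuple.
- exact: smeas_tuple.
Qed.

Lemma nth_join_ge (a a' : k.-tuple V) (b : m2.-tuple V) j : (k <= j)%N ->
  nth point (val a ++ val b) j = nth point (val a' ++ val b) j.
Proof. by move=> kj; rewrite !nth_cat !size_tuple ltnNge kj. Qed.

Lemma nth_join_le (a : k.-tuple V) (b : m2.-tuple V) j : (j <= k)%N ->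
  nth point (val a ++ val b) j = nth point (val a ++ [:: nth point (val b) 0]) j.
Proof.
move=> jk; rewrite !nth_cat !size_tuple.
case: ltnP => // kj.
have -> : j = k by apply/eqP; rewrite eqn_leq jk kj.
by rewrite subnn.
Qed.

Lemma indicB_join (B : set (n.+1.-tuple V)) hi a b :
  depends_only k.+1 hi B -> \1_B (join a b) = \1_B (join a0 b) :> R.
Proof.
move=> dB.
have H : forall a a' : k.-tuple V, B (join a b) -> B (join a' b).
  move=> a1 a2; apply: dB => i /andP[ki _].
  by rewrite !(tnth_nth point) !val_join; apply: nth_join_ge.
rewrite !indicE.
have -> : (join a b \in B) = (join a0 b \in B); last by [].
by apply/idP/idP => /set_mem h; apply/mem_set; apply: H h.
Qed.

Lemma tnth_join_km1 a b : (1 <= k)%N ->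
  tnth (join a b) (inord k.-1) = nth point (val a) k.-1.
Proof.
move=> k1; rewrite (tnth_nth point) val_join inordK; last first.
  by rewrite ltnS (leq_trans (leq_pred k) hk).
by rewrite nth_cat size_tuple prednK // leqnn.
Qed.

Lemma tnth_join_k a b : tnth (join a b) (inord k) = nth point (val b) 0.
Proof.
rewrite (tnth_nth point) val_join inordK; last by rewrite ltnS.
by rewrite nth_cat size_tuple ltnn subnn.
Qed.


Lemma Wq_lt (a : k.-tuple V) (b : m2.-tuple V) : (k < q)%N ->
  Wq (val a ++ val b) = Wq (val a0 ++ val b).
Proof.
move=> kq; apply: eq_bigr => i _; rewrite /cW; case: ifP => // qi.
have ki : (k <= i)%N by rewrite -ltnS (leq_trans kq qi).
by rewrite (nth_join_ge a a0 b i ki) (nth_join_ge a a0 b i.+1 (leqW ki)).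
Qed.

Lemma meas_B0 (B : set (n.+1.-tuple V)) : measurable B ->
  measurable_fun setT (fun b : m2.-tuple V => (\1_B (join a0 b))%:E * (Wq (val a0 ++ val b))%:E).
Proof.
move=> mB; apply: emeasurable_funM; apply/measurable_EFinP.
  apply: measurableT_comp (joinl_meas a0) => //; try exact: measurable_indic.
apply: (@Wq_meas _ _ (fun b : m2.-tuple V => val a0 ++ val b)).
apply: (@smeas_cat _ _ k) => //.
- by move=> z; rewrite size_tuple.
- exact: smeas_tuple.
Qed.

Lemma meas_indA (A : set V) : measurable A ->
  measurable_fun setT (fun a : k.-tuple V => (\1_A (nth point (val a) k.-1) : R)%:E).
Proof.
move=> mA; apply/measurable_EFinP.
apply: measurableT_comp (@measurable_nth k k.-1) => //; try exact: measurable_indic.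
Qed.

Lemma cv_lt (A : set V) (B : set (n.+1.-tuple V)) hi :
  (1 <= k)%N -> (k < q)%N -> measurable A -> measurable B -> depends_only k.+1 hi B ->
  PE piV K q (fun v => (\1_B v * \1_A (tnth v (inord k.-1)))%:E) y =
  PE piV K q (fun v => ((\1_B v)%:E * piV A)) y.
Proof.
move=> k1 kq mA mB dB.
rewrite !PE_tint; last 4 first.
- apply: emeasurable_funM => //; apply/measurable_EFinP.
  exact: measurable_indic.
- by move=> v; apply: mule_ge0 => //; rewrite lee_fin indic_ge0.
- apply/measurable_EFinP; apply: measurable_funM.
    exact: measurable_indic.
  apply: measurableT_comp (measurable_tnth _) => //; try exact: measurable_indic.
- by move=> v; rewrite lee_fin mulr_ge0 ?indic_ge0.
set C := ti (fun b : m2.-tuple V => (\1_B (join a0 b))%:E * (Wq (val a0 ++ val b))%:E).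
have C0 : 0 <= C.
  by apply: tint_ge0 => b; apply: mule_ge0; rewrite lee_fin ?indic_ge0 ?Wq_ge0.
rewrite !tint_join.
transitivity (ti (fun a : k.-tuple V => C * (\1_A (nth point (val a) k.-1))%:E)).
  congr ti; apply/funext => a.
  rewrite muleC -tint_scale ?lee_fin ?indic_ge0 //; last 2 first.
  - exact: (meas_B0 B mB).
  - by move=> b; apply: mule_ge0; rewrite lee_fin ?indic_ge0 ?Wq_ge0.
  congr ti; apply/funext => b.
  rewrite tnth_join_km1 // (indicB_join B hi a b dB) val_join (Wq_lt a b kq).
  by rewrite EFinM -muleA muleCA.
rewrite (@tint_scale k C (fun a : k.-tuple V => (\1_A (nth point (val a) k.-1) : R)%:E)) //; last first.
  exact: (meas_indA A mA).
rewrite tint_coord //; last by rewrite prednK.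
transitivity (ti (fun a : k.-tuple V => piV A * C)); last first.
  congr ti; apply/funext => a.
  rewrite -tint_scale //; last 2 first.
  - exact: (meas_B0 B mB).
  - by move=> b; apply: mule_ge0; rewrite lee_fin ?indic_ge0 ?Wq_ge0.
  congr ti; apply/funext => b.
  rewrite (indicB_join B hi a b dB) val_join (Wq_lt a b kq).
  by rewrite -muleA muleCA.
by rewrite tint_cst muleC.
Qed.


Definition W1 (w : V) (a : k.-tuple V) : R := (\prod_(i < n | (i < k)%N) cW i (val a ++ [:: w]))%R.
Definition W2 (b : m2.-tuple V) : R := (\prod_(i < n | ~~ (i < k)%N) cW i (val a0 ++ val b))%R.

Lemma Wq_split a b : Wq (val a ++ val b) = (W1 (nth point (val b) 0) a * W2 b)%R.
Proof.
rewrite /Wq (bigID (fun i : 'I_n => (i < k)%N)) /=; congr (_ * _)%R; apply: eq_bigr => i ik; rewrite /cW; case: ifP => // _.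
  by rewrite (nth_join_le a b i (ltnW ik)) (nth_join_le a b i.+1 ik).
rewrite -leqNgt in ik.
by rewrite (nth_join_ge a a0 b i ik) (nth_join_ge a a0 b i.+1 (leqW ik)).
Qed.

Lemma W1_meas d' (T : measurableType d') (wf : T -> V) (af : T -> k.-tuple V) :
  measurable_fun setT wf -> measurable_fun setT af ->
  measurable_fun setT (fun z => W1 (wf z) (af z)).
Proof.
move=> mw ma; apply: (@prodcW_meas _ _ _ (fun z => val (af z) ++ [:: wf z])).
apply: (@smeas_cat _ _ k) => //.
- by move=> z; rewrite size_tuple.
- exact: smeas_tuple.
- exact: smeas_cons1.
Qed.

Lemma W2_meas : measurable_fun setT W2.
Proof.
apply: (@prodcW_meas _ _ _ (fun b : m2.-tuple V => val a0 ++ val b)).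
apply: (@smeas_cat _ _ k) => //.
- by move=> z; rewrite size_tuple.
- exact: smeas_tuple.
Qed.

Let cK := (\prod_(i < n | (i < k)%N) cnu i)%R.

Lemma GDE w A : Dm k (W1 w) A = ti (fun a => (\1_A (nth point (val a) k.-1))%:E * (W1 w a)%:E).
Proof.
rewrite /Dm gabsE //.
- by apply: (@W1_meas _ _ (cst w) id).
- by move=> a; exact: prodcW_ge0.
Qed.

Lemma GD_bounds w : cK%:E <= Dm k (W1 w) setT <= 1.
Proof.
rewrite GDE.
under eq_fun do rewrite indicT /= mul1e.
have mW : measurable_fun setT (fun a => (W1 w a)%:E).
  by apply/measurable_EFinP; apply: (@W1_meas _ _ (cst w) id).
apply/andP; split.
  rewrite -[X in X <= _](@tint_cst k (cK%:E)).
  apply: tint_le => //.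
  - by move=> a; rewrite lee_fin ltW // prodcnu_gt0.
  - by move=> a; rewrite lee_fin; exact: prodcW_lb.
rewrite -[X in _ <= X](@tint_cst k 1).
apply: tint_le => //.
- by move=> a; rewrite lee_fin; exact: prodcW_ge0.
- by move=> a; rewrite lee_fin; exact: prodcW_le1.
Qed.

Definition Kge (w : V) : probability V R := mnormalize (Dm k (W1 w)) piV.


Lemma GD_pos w : 0 < Dm k (W1 w) setT.
Proof.
have /andP[h _] := GD_bounds w.
by apply: lt_le_trans h; rewrite lte_fin prodcnu_gt0.
Qed.

Lemma GD_fin w : Dm k (W1 w) setT \is a fin_num.
Proof.
have /andP[_ h] := GD_bounds w.
by rewrite ge0_fin_numE ?(ltW (GD_pos w)) // (le_lt_trans h) // ltey.
Qed.

Lemma KgeE w A : Kge w A = Dm k (W1 w) A * (fine (Dm k (W1 w) setT))^-1%:E.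
Proof.
rewrite /Kge /=; unfold mnormalize.
case: ifPn => // /orP[/eqP h|/eqP h].
  by have := GD_pos w; rewrite h ltxx.
by have := GD_fin w; rewrite h.
Qed.

Lemma Kge_mul w A : Kge w A * Dm k (W1 w) setT = Dm k (W1 w) A.
Proof.
rewrite KgeE -muleA -{2}(fineK (GD_fin w)) -EFinM mulVf ?mule1 //.
rewrite fine_eq0 ?GD_fin //; by rewrite (gt_eqF (GD_pos w)).
Qed.

Lemma GD_meas A : measurable A -> measurable_fun setT (fun w => Dm k (W1 w) A).
Proof.
move=> mA.
rewrite (_ : (fun w => _) = fun w => ti (fun a => (\1_A (nth point (val a) k.-1))%:E * (W1 w a)%:E)); last first.
  by apply/funext => w; rewrite GDE.
apply: (@tint_meas _ _ _ (fun z : V * k.-tuple V => (\1_A (nth point (val z.2) k.-1))%:E * (W1 z.1 z.2)%:E)).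
  apply: emeasurable_funM; apply/measurable_EFinP.
    apply: measurableT_comp (measurableT_comp (@measurable_nth k k.-1) measurable_snd) => //; try exact: measurable_indic.
  exact: (@W1_meas _ _ fst snd).
move=> z; apply: mule_ge0; rewrite lee_fin ?indic_ge0 //; exact: prodcW_ge0.
Qed.

Lemma Kge_meas A : measurable A -> measurable_fun setT (fun w => Kge w A).
Proof.
move=> mA.
rewrite (_ : (fun w => _) = fun w => Dm k (W1 w) A * (fine (Dm k (W1 w) setT))^-1%:E); last first.
  by apply/funext => w; rewrite KgeE.
apply: emeasurable_funM; first exact: GD_meas.
apply/measurable_EFinP.
apply: (@measurable_comp _ _ _ _ _ _ [set r : R | r != 0%R]).
- exact: open_measurable.
- move=> _ [w _ <-] /=.
  rewrite fine_eq0 ?GD_fin //; by rewrite (gt_eqF (GD_pos w)).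
- apply: open_continuous_measurable_fun => //; apply/in_setP => x /= x0.
  exact: inv_continuous.
- by apply: measurableT_comp => //; exact: GD_meas.
Qed.


Lemma meas_bb (B : set (n.+1.-tuple V)) : measurable B ->
  measurable_fun setT (fun b : m2.-tuple V => (\1_B (join a0 b))%:E * (W2 b)%:E).
Proof.
move=> mB; apply: emeasurable_funM; apply/measurable_EFinP.
  by apply: measurableT_comp (joinl_meas a0) => //; try exact: measurable_indic.
exact: W2_meas.
Qed.

Lemma cv_ge (A : set V) (B : set (n.+1.-tuple V)) hi :
  (1 <= k)%N -> (q <= k)%N -> measurable A -> measurable B -> depends_only k.+1 hi B ->
  PE piV K q (fun v => (\1_B v * \1_A (tnth v (inord k.-1)))%:E) y =
  PE piV K q (fun v => ((\1_B v)%:E * Kge (tnth v (inord k)) A)) y.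
Proof.
move=> k1 qk mA mB dB.
rewrite !PE_tint; last 4 first.
- apply: emeasurable_funM.
    by apply/measurable_EFinP; exact: measurable_indic.
  exact: measurableT_comp (Kge_meas A mA) (measurable_tnth _).
- by move=> v; apply: mule_ge0 => //; rewrite lee_fin indic_ge0.
- apply/measurable_EFinP; apply: measurable_funM.
    exact: measurable_indic.
  by apply: measurableT_comp (measurable_tnth _) => //; try exact: measurable_indic.
- by move=> v; rewrite lee_fin mulr_ge0 ?indic_ge0.
set bb := fun b : m2.-tuple V => (\1_B (join a0 b))%:E * (W2 b)%:E.
have bb0 : forall b, 0 <= bb b.
  by move=> b; apply: mule_ge0; rewrite lee_fin ?indic_ge0 ?prodcW_ge0.
have mbb : measurable_fun setT (fun z : k.-tuple V * m2.-tuple V => bb z.2).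
  exact: measurableT_comp (meas_bb B mB) measurable_snd.
have mw : measurable_fun setT (fun z : k.-tuple V * m2.-tuple V => nth point (val z.2) 0).
  exact: measurableT_comp (@measurable_nth m2 0) measurable_snd.
have mW1 : measurable_fun setT (fun z : k.-tuple V * m2.-tuple V => (W1 (nth point (val z.2) 0) z.1)%:E).
  apply/measurable_EFinP.
  exact: (@W1_meas _ _ (fun z : k.-tuple V * m2.-tuple V => nth point (val z.2) 0) fst).
rewrite !tint_join.
transitivity (ti (fun b : m2.-tuple V => bb b * Dm k (W1 (nth point (val b) 0)) A)).
  pose H1 := fun z : k.-tuple V * m2.-tuple V => bb z.2 * ((\1_A (nth point (val z.1) k.-1))%:E * (W1 (nth point (val z.2) 0) z.1)%:E).
  transitivity (ti (fun a => ti (fun b => H1 (a, b)))).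
    congr ti; apply/funext => a; congr ti; apply/funext => b.
    rewrite /H1 /bb /= tnth_join_km1 // (indicB_join B hi a b dB) val_join Wq_split.
    by rewrite -!EFinM; congr EFin; ring.
  rewrite (@tint_swap _ _ H1); last 2 first.
  - apply: emeasurable_funM => //; apply: emeasurable_funM => //.
    apply/measurable_EFinP.
    apply: measurableT_comp (measurableT_comp (@measurable_nth k k.-1) measurable_fst) => //; try exact: measurable_indic.
  - move=> z; apply: mule_ge0 => //; apply: mule_ge0; rewrite lee_fin ?indic_ge0 //.
    exact: prodcW_ge0.
  congr ti; apply/funext => b; rewrite /H1 /= tint_scale //.
  - by rewrite GDE.
  - apply: emeasurable_funM; apply/measurable_EFinP.
      by apply: measurableT_comp (@measurable_nth k k.-1) => //; try exact: measurable_indic.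
    exact: (@W1_meas _ _ (cst (nth point (val b) 0)) id).
  - move=> a; apply: mule_ge0; rewrite lee_fin ?indic_ge0 //; exact: prodcW_ge0.
pose H2 := fun z : k.-tuple V * m2.-tuple V => (bb z.2 * Kge (nth point (val z.2) 0) A) * (W1 (nth point (val z.2) 0) z.1)%:E.
transitivity (ti (fun a => ti (fun b => H2 (a, b)))); last first.
  congr ti; apply/funext => a; congr ti; apply/funext => b.
  rewrite /H2 /bb /= tnth_join_k (indicB_join B hi a b dB) val_join Wq_split.
  rewrite EFinM -!muleA; congr (_ * _).
  by rewrite muleCA [X in _ * X = _]muleC.
rewrite (@tint_swap _ _ H2); last 2 first.
- apply: emeasurable_funM => //; apply: emeasurable_funM => //.
  exact: measurableT_comp (Kge_meas A mA) mw.
- move=> z; apply: mule_ge0; rewrite ?lee_fin ?prodcW_ge0 //.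
  by apply: mule_ge0.
congr ti; apply/funext => b; rewrite /H2 /= tint_scale //.
- rewrite -(Kge_mul (nth point (val b) 0) A) /bb muleA; congr (_ * _).
  rewrite GDE; congr ti; apply/funext => a.
  by rewrite indicT /= mul1e.
- by apply: mule_ge0.
- apply/measurable_EFinP.
  exact: (@W1_meas _ _ (cst (nth point (val b) 0)) id).
- by move=> a; rewrite lee_fin; exact: prodcW_ge0.
Qed.


Definition W1P (P : pred 'I_n) (w : V) (a : k.-tuple V) : R :=
  (\prod_(i < n | P i) cW i (val a ++ [:: w]))%R.

Lemma W1P_meas P d' (T : measurableType d') (wf : T -> V) (af : T -> k.-tuple V) :
  measurable_fun setT wf -> measurable_fun setT af ->
  measurable_fun setT (fun z => W1P P (wf z) (af z)).
Proof.
move=> mw ma; apply: (@prodcW_meas _ _ _ (fun z => val (af z) ++ [:: wf z])).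
apply: (@smeas_cat _ _ k) => //.
- by move=> z; rewrite size_tuple.
- exact: smeas_tuple.
- exact: smeas_cons1.
Qed.

Lemma GDPE P w A : Dm k (W1P P w) A = ti (fun a => (\1_A (nth point (val a) k.-1))%:E * (W1P P w a)%:E).
Proof.
rewrite /Dm gabsE //.
- by apply: (@W1P_meas P _ _ (cst w) id).
- by move=> a; exact: prodcW_ge0.
Qed.

Lemma GDP_bounds P w : (\prod_(i < n | P i) cnu i)%:E <= Dm k (W1P P w) setT <= 1.
Proof.
rewrite GDPE.
have -> : ti (fun a : k.-tuple V => (\1_[set: V] (nth point (val a) k.-1))%:E * (W1P P w a)%:E) =
   ti (fun a => (W1P P w a)%:E).
  by congr ti; apply/funext => a; rewrite indicT /= mul1e.
have mW : measurable_fun setT (fun a => (W1P P w a)%:E).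
  by apply/measurable_EFinP; apply: (@W1P_meas P _ _ (cst w) id).
apply/andP; split.
  rewrite -[X in X <= _](@tint_cst k ((\prod_(i < n | P i) cnu i)%:E)).
  apply: tint_le => //.
  - by move=> a; rewrite lee_fin ltW // prodcnu_gt0.
  - by move=> a; rewrite lee_fin; exact: prodcW_lb.
rewrite -[X in _ <= X](@tint_cst k 1).
apply: tint_le => //.
- by move=> a; rewrite lee_fin; exact: prodcW_ge0.
- by move=> a; rewrite lee_fin; exact: prodcW_le1.
Qed.

Lemma GDP_pos P w : 0 < Dm k (W1P P w) setT.
Proof.
have /andP[h _] := GDP_bounds P w.
by apply: lt_le_trans h; rewrite lte_fin prodcnu_gt0.
Qed.

Lemma GDP_fin P w : Dm k (W1P P w) setT \is a fin_num.
Proof.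
have /andP[_ h] := GDP_bounds P w.
by rewrite ge0_fin_numE ?(ltW (GDP_pos P w)) // (le_lt_trans h) // ltey.
Qed.

Lemma mnormPE P w A : (mnormalize (Dm k (W1P P w)) piV : probability V R) A =
  Dm k (W1P P w) A * (fine (Dm k (W1P P w) setT))^-1%:E.
Proof.
rewrite /=; unfold mnormalize; case: ifPn => // /orP[/eqP h|/eqP h].
  by have := GDP_pos P w; rewrite h ltxx.
by have := GDP_fin P w; rewrite h.
Qed.

Lemma ratio_le (c : R) (a a' b b' : \bar R) : (0 < c)%R -> 0 <= a' -> a' <= b' ->
  0 <= a -> a <= b -> 0 < b -> b <= b' -> b' <= 1 -> c%:E * a' <= a ->
  c%:E * (a' * (fine b')^-1%:E) <= a * (fine b)^-1%:E.
Proof.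
move=> c0 a'0 a'b' a0 ab b0 bb' b'1 ca.
have fin (x : \bar R) : 0 <= x -> x <= 1 -> x \is a fin_num.
  by move=> x0 x1; rewrite ge0_fin_numE // (le_lt_trans x1) // ltey.
have b'0 : 0 < b' by apply: lt_le_trans bb'.
have fb' : b' \is a fin_num by apply: fin => //; exact: ltW.
have fb : b \is a fin_num by apply: fin; [exact: ltW | exact: le_trans bb' b'1].
have fa : a \is a fin_num by apply: fin => //; exact: le_trans ab (le_trans bb' b'1).
have fa' : a' \is a fin_num by apply: fin => //; exact: le_trans a'b' b'1.
have a'0r : (0 <= fine a')%R by apply: fine_ge0.
have a0r : (0 <= fine a)%R by apply: fine_ge0.
have b0r : (0 < fine b)%R by apply: fine_gt0; rewrite b0 /= ltey_eq fb.
have b'0r : (0 < fine b')%R by apply: fine_gt0; rewrite b'0 /= ltey_eq fb'.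
have bb'r : (fine b <= fine b')%R by apply: fine_le.
have car : (c * fine a' <= fine a)%R by rewrite -lee_fin EFinM !fineK.
rewrite -[a](fineK fa) -[a'](fineK fa') -!EFinM lee_fin mulrA.
apply: (le_trans (ler_wpM2r _ car)); first by rewrite invr_ge0 ltW.
apply: ler_wpM2l => //.
by rewrite lef_pV2 // posrE.
Qed.

Lemma Kge_minor : (1 <= k)%N -> (q <= k)%N ->
  exists mu : probability V R, forall A, measurable A -> forall w,
    (nu k)%:E * mu A <= Kge w A.
Proof.
move=> k1 qk.
have km1 : (k.-1 < n)%N by rewrite prednK.
pose P' := fun i : 'I_n => (i.+1 < k)%N.
exists (mnormalize (Dm k (W1P P' point)) piV) => A mA w.
have split a : W1 w a = (W1P P' point a * cW (Ordinal km1) (val a ++ [:: w]))%R.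
  rewrite /W1 (bigID P') /=; congr (_ * _)%R.
    apply: eq_big => i.
      by rewrite /P'; case h: (i.+1 < k)%N; rewrite ?andbT ?andbF // ltnW.
    move=> ik; rewrite /cW; case: ifP => // _.
    have h : forall j, (j < k)%N -> nth point (val a ++ [:: w]) j = nth point (val a ++ [:: point]) j.
      by move=> j jk; rewrite !nth_cat size_tuple jk.
    by move: ik => /andP[ik1 ik2]; rewrite (h i ik1) (h i.+1 ik2).
  apply: big_pred1 => i /=; rewrite /P' -leqNgt.
  apply/andP/eqP.
    move=> [ik ki]; apply/val_inj => /=.
    by apply/eqP; rewrite -(eqn_add2r 1) !addn1 prednK // eqn_leq ki ik.
  move=> -> /=; rewrite prednK //; split => //.
have cb (a : k.-tuple V) : (nu k <= cW (Ordinal km1) (val a ++ [:: w]) <= 1)%R.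
  rewrite /cW /= prednK // qk; apply/andP; split.
    by apply: Knu.
  by apply: Kle1.
have W1'ge0 a : (0 <= W1P P' point a)%R by exact: prodcW_ge0.
have mW' : measurable_fun setT (fun a => W1P P' point a).
  exact: (@W1P_meas P' _ _ (cst point) id).
have mW : measurable_fun setT (fun a => W1 w a).
  exact: (@W1_meas _ _ (cst w) id).
have mI : measurable_fun setT (fun a : k.-tuple V => (\1_A (nth point (val a) k.-1) : R)%:E).
  exact: meas_indA.
rewrite KgeE mnormPE.
apply: ratio_le.
- by apply: nu_pos.
- by [].
- by apply: le_measure; rewrite ?inE.
- by [].
- by apply: le_measure; rewrite ?inE.
- exact: GD_pos.
- rewrite GDE GDPE; apply: tint_le.
  + by apply: emeasurable_funM; [exact: (meas_indA setT measurableT) | exact/measurable_EFinP].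
  + by apply: emeasurable_funM; [exact: (meas_indA setT measurableT) | exact/measurable_EFinP].
  + by move=> a; rewrite -EFinM lee_fin mulr_ge0 ?indic_ge0 ?prodcW_ge0.
  + move=> a; rewrite -!EFinM lee_fin ler_wpM2l ?indic_ge0 // split.
    have /andP[_ h1] := cb a.
    by rewrite -[X in (_ <= X)%R]mulr1 ler_wpM2l.
- by have /andP[] := GDP_bounds P' point.
- rewrite GDE GDPE -tint_scale //; last 2 first.
  + by apply: emeasurable_funM => //; exact/measurable_EFinP.
  + by move=> a; apply: mule_ge0; rewrite lee_fin ?indic_ge0.
  2: by rewrite lee_fin ltW // nu_pos.
  apply: tint_le.
  + apply: emeasurable_funM => //; apply: emeasurable_funM => //.
    exact/measurable_EFinP.
  + by apply: emeasurable_funM => //; exact/measurable_EFinP.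
  + by move=> a; rewrite -!EFinM lee_fin mulr_ge0 ?mulr_ge0 ?indic_ge0 // ltW // nu_pos.
  + move=> a; rewrite -!EFinM lee_fin split mulrCA ler_wpM2l ?indic_ge0 //.
    have /andP[h0 _] := cb a.
    by rewrite mulrC ler_wpM2l.
Qed.

End Split.

End Model.

End Tint.

Theorem lemma4 (R : realType) (d : measure_display) (V : measurableType d)
    (piV : probability V R) (X : finType) (n : nat)
    (K : nat -> X -> V -> V -> R) (nu : nat -> R)
    (hn : (1 <= n)%N)
    (Kmeas : forall i x, (1 <= i)%N ->
       measurable_fun [set: V * V] (fun p : V * V => K i x p.1 p.2))
    (Kprob : forall i v w, (1 <= i)%N -> \sum_(x : X) K i x v w = 1)
    (nu_pos : forall i, (1 <= i)%N -> 0 < nu i)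
    (H2 : forall i x v w, (1 <= i)%N -> nu i <= K i x v w <= 1) :
  forall q : nat, (1 <= q <= n)%N ->
  exists Kc : nat -> n.-tuple X -> V -> probability V R,
    (* kernels: measurable in the conditioning point *)
    (forall k y A, (1 <= k < n)%N -> measurable A ->
        measurable_fun [set: V] (fun w : V => Kc k y w A)) /\
    (* conditionally on X_{q:n}, (V_n,...,V_1) is Markov with kernels Kc:
       Kc k (V_{k+1}) A = P(V_k in A | V_{k+1:n}, X_{q:n})
                        = P(V_k in A | V_{k+1}, X_{q:n}) *)
    (forall k, (1 <= k < n)%N ->
        cond_version piV K q k k.+1 n (Kc k) /\
        cond_version piV K q k k.+1 k.+1 (Kc k)) /\
    (* minorization for q <= k < n *)
    (forall k, (q <= k < n)%N -> forall y : n.-tuple X,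
        exists mu : probability V R, forall A, measurable A -> forall w,
          ((nu k)%:E * mu A <= Kc k y w A)%E) /\
    (* independence from the conditioning for 1 <= k < q *)
    (forall k, (1 <= k < q)%N -> forall y w A, measurable A ->
        Kc k y w A = piV A).
Proof.
have Kge0 : forall i x v w, (1 <= i)%N -> 0 <= K i x v w.
  move=> i x v w i1; have /andP[h _] := H2 i x v w i1.
  exact: le_trans (ltW (nu_pos i i1)) h.
have Kle1 : forall i x v w, (1 <= i)%N -> K i x v w <= 1.
  by move=> i x v w i1; have /andP[_ h] := H2 i x v w i1.
have Knu : forall i x v w, (1 <= i)%N -> nu i <= K i x v w.
  by move=> i x v w i1; have /andP[h _] := H2 i x v w i1.
move=> q /andP[q1 qn].
exists (fun k y w => if (q <= k)%N then Kge piV X n K q y k w else piV).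
split; [|split; [|split]].
- move=> k y A /andP[k1 kn] mA.
  case: (q <= k)%N.
    exact: (Kge_meas piV X n K Kmeas Kge0 Kle1 q y nu nu_pos Knu k A mA).
  exact: measurable_cst.
- move=> k /andP[k1 kn]; have hk : (k <= n)%N := ltnW kn.
  split => y A B mA mB dB; case: (leqP q k) => qk.
  + exact: (cv_ge piV X n K Kmeas Kprob Kge0 Kle1 q y nu nu_pos Knu k hk A B _ k1 qk mA mB dB).
  + exact: (cv_lt piV X n K Kmeas Kprob Kge0 q y k hk A B _ k1 qk mA mB dB).
  + exact: (cv_ge piV X n K Kmeas Kprob Kge0 Kle1 q y nu nu_pos Knu k hk A B _ k1 qk mA mB dB).
  + exact: (cv_lt piV X n K Kmeas Kprob Kge0 q y k hk A B _ k1 qk mA mB dB).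
- move=> k /andP[qk kn] y.
  have k1 : (0 < k)%N := leq_trans q1 qk.
  have [mu hmu] := Kge_minor piV X n K Kmeas Kge0 Kle1 q y nu nu_pos Knu k (ltnW kn) k1 qk.
  exists mu => A mA w; rewrite qk; exact: hmu.
- move=> k /andP[k1 kq] y w A mA.
  by rewrite (leqNgt q k) kq.
Qed.
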